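(* Let $(G,\cdot)$ be a group and $\psi\in\operatorname{End}(G,\cdot)$. (1) If $\psi([\psi(G),G])\le Z(G,\cdot)$, then each of the following maps $G\times G\to G\times G$ defines a set-theoretic non-degenerate solution of the Yang--Baxter equation on $G$: $$r_1(g,h)=\big(\psi(g)\,h\,\psi(g)^{-1},\ \psi(h^{-1}g)\,h^{-1}\psi(g)^{-1}g\,\psi(g)\,h\,\psi(g^{-1}h)\big);$$ $$r_2(g,h)=\big(g\,\psi(g)\,h\,\psi(g)^{-1}g^{-1},\ \psi(g h^{-1}g^{-1})\,g\,\psi(g h g^{-1})\big).$$ These two are mutually inverse and coincide if and only if $(G,\cdot)$ is abelian. (2) If moreover $\psi([G,G])\le Z(G,\cdot)$, then also $$r_3(g,h)=\big(\psi(g)^{-1}h\,\psi(g),\ \psi(g)^{-1}h^{-1}\psi(g)\,g\,h\big);$$ $$r_4(g,h)=\big(g\,h\,\psi(h)\,g^{-1}\psi(h)^{-1},\ \psi(h)\,g\,\psi(h)^{-1}\big)$$ define set-theoretic non-degenerate solutions of the Yang--Baxter equation; they are mutually inverse and coincide if and only if $g\,\psi(g)\,h\,\psi(g)^{-1}=h\,\psi(h)\,g\,\psi(h)^{-1}$ for all $g,h\in G$.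
   Context: All products are in $(G,\cdot)$; $\psi(G)$ is the image of $\psi$; $[x,y]=xyx^{-1}y^{-1}$ and $[A,B]$ is the subgroup generated by $[a,b]$, $a\in A,b\in B$; $Z(G,\cdot)$ is the centre. A set-theoretic solution of the Yang--Baxter equation is a pair $(X,r)$ with $X\neq\emptyset$ and $r\colon X\times X\to X\times X$, $r(x,y)=(\sigma_x(y),\tau_y(x))$, a bijection satisfying $(r\times\mathrm{id}_X)(\mathrm{id}_X\times r)(r\times\mathrm{id}_X)=(\mathrm{id}_X\times r)(r\times\mathrm{id}_X)(\mathrm{id}_X\times r)$; it is non-degenerate if all $\sigma_x$ and $\tau_x$ are bijective. *)

(* Defs.v *)
From Stdlib Require Import ssreflect ssrfun.

Record group := Group {
  carrier :> Type;
  gmul : carrier -> carrier -> carrier;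
  ginv : carrier -> carrier;
  gone : carrier;
  gmulA : forall x y z, gmul x (gmul y z) = gmul (gmul x y) z;
  gmul1g : forall x, gmul gone x = x;
  gmulg1 : forall x, gmul x gone = x;
  gmulVg : forall x, gmul (ginv x) x = gone;
  gmulgV : forall x, gmul x (ginv x) = gone
}.

Declare Scope grp_scope.
Delimit Scope grp_scope with grp.
Notation "x * y" := (gmul _ x y) : grp_scope.
Notation "x ^-1" := (ginv _ x) : grp_scope.
Notation "1" := (gone _) : grp_scope.
Local Open Scope grp_scope.

Section Defs.
Variable G : group.

Definition is_endo (psi : G -> G) : Prop :=
  forall x y : G, psi (x * y) = psi x * psi y.

Definition gcomm (x y : G) : G := x * y * x^-1 * y^-1.

Inductive gen (S : G -> Prop) : G -> Prop :=
  | gen_in x : S x -> gen S x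
  | gen_one : gen S 1
  | gen_mul x y : gen S x -> gen S y -> gen S (x * y)
  | gen_inv x : gen S x -> gen S (x^-1).

Definition comm_subgroup (A B : G -> Prop) : G -> Prop :=
  gen (fun x => exists a b, A a /\ B b /\ x = gcomm a b).

Definition image (psi : G -> G) : G -> Prop := fun y => exists x, y = psi x.
Definition whole : G -> Prop := fun _ => True.

Definition center : G -> Prop := fun z => forall y : G, z * y = y * z.

Definition abelian : Prop := forall x y : G, x * y = y * x.

Definition maps_into_center (psi : G -> G) (H : G -> Prop) : Prop :=
  forall x, H x -> center (psi x).

End Defs.

Section YBE.
Variable X : Type.

Definition r12 (r : X * X -> X * X) (t : X * X * X) : X * X * X :=
  let '(x, y, z) := t in let '(a, b) := r (x, y) in (a, b, z).
Definition r23 (r : X * X -> X * X) (t : X * X * X) : X * X * X :=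
  let '(x, y, z) := t in let '(b, c) := r (y, z) in (x, b, c).

Definition braid_eq (r : X * X -> X * X) : Prop :=
  forall t, r12 r (r23 r (r12 r t)) = r23 r (r12 r (r23 r t)).

Definition sigma (r : X * X -> X * X) (x : X) : X -> X := fun y => fst (r (x, y)).
Definition tau (r : X * X -> X * X) (y : X) : X -> X := fun x => snd (r (x, y)).

(* X is nonempty automatically once r is given on a group; we keep the
   paper's definition: bijective r satisfying the braid equation *)
Definition is_solution (r : X * X -> X * X) : Prop :=
  inhabited X /\ bijective r /\ braid_eq r.

Definition nondegenerate (r : X * X -> X * X) : Prop :=
  (forall x, bijective (sigma r x)) /\ (forall y, bijective (tau r y)).

Definition nd_solution (r : X * X -> X * X) : Prop :=
  is_solution r /\ nondegenerate r.

Definition mutually_inverse (r s : X * X -> X * X) : Prop :=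
  (forall p, r (s p) = p) /\ (forall p, s (r p) = p).

Definition coincide (r s : X * X -> X * X) : Prop := forall p, r p = s p.
End YBE.

Section Maps.
Variables (G : group) (psi : G -> G).

Definition r1 (p : G * G) : G * G :=
  let '(g, h) := p in
  (psi g * h * (psi g)^-1,
   psi (h^-1 * g) * h^-1 * (psi g)^-1 * g * psi g * h * psi (g^-1 * h)).

Definition r2 (p : G * G) : G * G :=
  let '(g, h) := p in
  (g * psi g * h * (psi g)^-1 * g^-1,
   psi (g * h^-1 * g^-1) * g * psi (g * h * g^-1)).

Definition r3 (p : G * G) : G * G :=
  let '(g, h) := p in
  ((psi g)^-1 * h * psi g,
   (psi g)^-1 * h^-1 * psi g * g * h).

Definition r4 (p : G * G) : G * G :=
  let '(g, h) := p in
  (g * h * psi h * g^-1 * (psi h)^-1,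
   psi h * g * (psi h)^-1).
End Maps.

(* Main.v *)
Require Import Defs.
From Stdlib Require Import List Permutation Arith Bool.
Import ListNotations.

Section Norm.
Variables (A : Type) (m : A -> A -> A) (i : A -> A) (e : A).
Hypotheses (mA : forall x y z, m x (m y z) = m (m x y) z)
  (m1 : forall x, m e x = x) (m1r : forall x, m x e = x)
  (mVl : forall x, m (i x) x = e) (mVr : forall x, m x (i x) = e).

Inductive tm := TA (n : nat) | TM (a b : tm) | TI (a : tm) | T1.

Variable env : list A.
Definition atom n := nth n env e.
Fixpoint ev t := match t with TA n => atom n | TM a b => m (ev a) (ev b)
  | TI a => i (ev a) | T1 => e end.
Definition lit (x : nat * bool) := if snd x then atom (fst x) else i (atom (fst x)).
Fixpoint evw w := match w with nil => e | x :: w => m (lit x) (evw w) end.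
Definition flip (x : nat * bool) := (fst x, negb (snd x)).
Fixpoint flat t := match t with TA n => [(n, true)] | TM a b => flat a ++ flat b
  | TI a => rev (map flip (flat a)) | T1 => nil end.

Lemma inv_mul x y : i (m x y) = m (i y) (i x).
Proof.
  assert (H : m (m x y) (m (i y) (i x)) = e).
  { rewrite mA, <- (mA x y (i y)), mVr, m1r, mVr. reflexivity. }
  transitivity (m (i (m x y)) (m (m x y) (m (i y) (i x)))).
  - rewrite H, m1r. reflexivity.
  - rewrite (mA (i (m x y))), mVl, m1. reflexivity.
Qed.
Lemma inv_e : i e = e.
Proof. rewrite <- (m1 (i e)). apply mVr. Qed.
Lemma inv_inv x : i (i x) = x.
Proof.
  rewrite <- (m1r (i (i x))), <- (mVl x), mA, mVl, m1. reflexivity.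
Qed.

Lemma evw_app u v : evw (u ++ v) = m (evw u) (evw v).
Proof. induction u as [|x u IH]; simpl. now rewrite m1. now rewrite IH, mA. Qed.
Lemma evw_snoc u x : evw (u ++ [x]) = m (evw u) (lit x).
Proof. rewrite evw_app. simpl. now rewrite m1r. Qed.
Lemma lit_flip x : lit (flip x) = i (lit x).
Proof. destruct x as [n [|]]; unfold lit, flip; simpl; auto. now rewrite inv_inv. Qed.
Lemma evw_inv w : evw (rev (map flip w)) = i (evw w).
Proof.
  induction w as [|x w IH]; simpl. now rewrite inv_e.
  rewrite evw_snoc, IH, lit_flip, inv_mul. reflexivity.
Qed.
Lemma flat_ok t : evw (flat t) = ev t.
Proof.
  induction t; simpl.
  - apply m1r.
  - rewrite evw_app. congruence.
  - rewrite evw_inv. congruence.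
  - reflexivity.
Qed.

Definition cancels (x y : nat * bool) := Nat.eqb (fst x) (fst y) && xorb (snd x) (snd y).
Definition ins x w := match w with y :: w' => if cancels x y then w' else x :: w | nil => [x] end.
Definition reduce w := fold_right ins nil w.
Lemma ins_ok x w : evw (ins x w) = m (lit x) (evw w).
Proof.
  destruct w as [|y w]; simpl; auto.
  destruct (cancels x y) eqn:E; simpl; auto.
  unfold cancels in E. apply andb_true_iff in E. destruct E as [E1 E2].
  apply Nat.eqb_eq in E1. destruct x as [n b], y as [n' b']; simpl in *. subst n'.
  rewrite mA. unfold lit; destruct b, b'; simpl in *; try discriminate.
  - now rewrite mVr, m1.
  - now rewrite mVl, m1.
Qed.
Lemma reduce_ok w : evw (reduce w) = evw w.
Proof. induction w as [|x w IH]; simpl; auto. rewrite ins_ok. congruence. Qed.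

Variable C : list nat.
Hypothesis HC : forall k, In k C -> forall y, m (atom k) y = m y (atom k).
Definition iscen (x : nat * bool) := existsb (Nat.eqb (fst x)) C.
Definition central z := forall y, m z y = m y z.
Lemma cen_inv z : central z -> central (i z).
Proof.
  intros H y. transitivity (m (i z) (m (m y z) (i z))).
  - rewrite <- (mA y z), mVr, m1r. reflexivity.
  - rewrite <- H. rewrite (mA (i z)), (mA (i z)), mVl, m1. reflexivity.
Qed.
Lemma cen_mul z z' : central z -> central z' -> central (m z z').
Proof. intros H H' y. rewrite <- mA, H', mA, H, mA. reflexivity. Qed.
Lemma lit_cen x : iscen x = true -> central (lit x).
Proof.
  intros H. unfold iscen in H. apply existsb_exists in H.
  destruct H as [k [Hk Hk']]. apply Nat.eqb_eq in Hk'.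
  destruct x as [n [|]]; unfold lit; simpl in *; subst.
  - intro y. now apply HC.
  - apply cen_inv. intro y. now apply HC.
Qed.
Lemma evw_cen w : (forall x, In x w -> iscen x = true) -> central (evw w).
Proof.
  induction w as [|x w IH]; simpl; intros H.
  - intro y. now rewrite m1, m1r.
  - apply cen_mul. apply lit_cen; auto. apply IH; auto.
Qed.
Definition ncen x := negb (iscen x).
Lemma split_ok w : evw w = m (evw (filter iscen w)) (evw (filter ncen w)).
Proof.
  induction w as [|x w IH]; simpl. now rewrite m1.
  unfold ncen at 1. destruct (iscen x) eqn:E; simpl.
  - rewrite IH, mA. reflexivity.
  - assert (Hc : central (evw (filter iscen w))).
    { apply evw_cen. intros y Hy. apply filter_In in Hy. tauto. }
    rewrite IH, !mA, (Hc (lit x)). reflexivity.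
Qed.

Definition keyle (x y : nat * bool) :=
  Nat.ltb (fst x) (fst y) || (Nat.eqb (fst x) (fst y) && implb (snd x) (snd y)).
Fixpoint sins x w := match w with nil => [x]
  | y :: w' => if keyle x y then x :: w else y :: sins x w' end.
Fixpoint isort w := match w with nil => nil | x :: w => sins x (isort w) end.
Lemma sins_perm x w : Permutation (sins x w) (x :: w).
Proof.
  induction w as [|y w IH]; simpl; auto.
  destruct (keyle x y); auto.
  eapply perm_trans. apply perm_skip, IH. apply perm_swap.
Qed.
Lemma isort_perm w : Permutation (isort w) w.
Proof.
  induction w as [|x w IH]; simpl; auto.
  eapply perm_trans. apply sins_perm. now apply perm_skip.
Qed.
Lemma perm_evw u v : Permutation u v -> (forall x, In x u -> iscen x = true) -> evw u = evw v.
Proof.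
  induction 1 as [|x u v Hp IHp|x y l|u v w H1 IH1 H2 IH2]; simpl; intros H; auto.
  - rewrite IHp; auto.
  - rewrite !mA. f_equal. apply lit_cen. apply H. simpl; auto.
  - rewrite IH1; auto. apply IH2.
    intros z Hz. apply H. eapply Permutation_in. symmetry. eauto. auto.
Qed.

Definition nf w := (reduce (isort (filter iscen w)), reduce (filter ncen w)).
Lemma nf_ok w : evw w = m (evw (fst (nf w))) (evw (snd (nf w))).
Proof.
  simpl. rewrite !reduce_ok. rewrite split_ok. f_equal.
  symmetry. apply perm_evw. apply isort_perm.
  intros x Hx. eapply Permutation_in in Hx. 2: apply isort_perm.
  apply filter_In in Hx. tauto.
Qed.
Theorem nf_sound t1 t2 : nf (flat t1) = nf (flat t2) -> ev t1 = ev t2.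
Proof. intros H. rewrite <- !flat_ok, nf_ok, H, <- nf_ok. reflexivity. Qed.
End Norm.


Ltac inList x xs := lazymatch xs with
  | nil => false | cons x _ => true | cons _ ?xs' => inList x xs' end.
Ltac addL x xs := let b := inList x xs in
  lazymatch b with true => xs | false => constr:(cons x xs) end.
Ltac atoms m i e t xs := lazymatch t with
  | m ?a ?b => let xs := atoms m i e a xs in atoms m i e b xs
  | i ?a => atoms m i e a xs
  | e => xs
  | _ => addL t xs end.
Ltac lookup x xs := lazymatch xs with
  | cons x _ => constr:(O)
  | cons _ ?xs' => let n := lookup x xs' in constr:(S n) end.
Ltac reify m i e xs t := lazymatch t with
  | m ?a ?b => let ra := reify m i e xs a in let rb := reify m i e xs b in constr:(TM ra rb)
  | i ?a => let ra := reify m i e xs a in constr:(TI ra)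
  | e => constr:(T1)
  | _ => let n := lookup t xs in constr:(TA n) end.
Ltac cenidx cen xs n := lazymatch xs with
  | nil => constr:(@nil nat)
  | cons ?x ?xs' => let r := cenidx cen xs' (S n) in
     let b := cen x in lazymatch b with true => constr:(cons n r) | false => r end
  end.
Ltac no_cen x := constr:(false).

Ltac gnorm_gen m i e mA m1 m1r mVl mVr cen cent :=
  lazymatch goal with |- ?l = ?r =>
    let T := type of l in let xs := atoms m i e l (@nil T) in
    let xs := atoms m i e r xs in
    let rl := reify m i e xs l in
    let rr := reify m i e xs r in
    let C := cenidx cen xs O in
    refine (nf_sound _ m i e mA m1 m1r mVl mVr xs C _ rl rr _);
    [ let k := fresh in let Hk := fresh in intros k Hk; simpl in Hk;
      repeat (destruct Hk as [Hk|Hk]; [subst k; simpl; cent|]); contradiction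
    | vm_compute; reflexivity ]
  end.


From Stdlib Require Import ssreflect ssrfun FunctionalExtensionality.

Record SB (A : Type) := MkSB {
  sm : A -> A -> A; si : A -> A; se : A; sc : A -> A -> A; sci : A -> A;
  smA : forall x y z, sm x (sm y z) = sm (sm x y) z;
  sm1 : forall x, sm se x = x; sm1r : forall x, sm x se = x;
  smVl : forall x, sm (si x) x = se; smVr : forall x, sm x (si x) = se;
  scA : forall x y z, sc x (sc y z) = sc (sc x y) z;
  sc1 : forall x, sc se x = x; sc1r : forall x, sc x se = x;
  scVl : forall x, sc (sci x) x = se; scVr : forall x, sc x (sci x) = se;
  scomp : forall a b d, sc a (sm b d) = sm (sm (sc a b) (si a)) (sc a d) }.

Lemma opcomp (A : Type) (B : SB A) a b d :
  sc A B a (sm A B d b) = sm A B (sc A B a d) (sm A B (si A B a) (sc A B a b)).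
Proof. rewrite scomp. gnorm_gen (sm A B) (si A B) (se A B) (smA A B) (sm1 A B) (sm1r A B) (smVl A B) (smVr A B) no_cen idtac. Qed.

Definition opSB (A : Type) (B : SB A) : SB A :=
  MkSB A (fun x y => sm A B y x) (si A B) (se A B) (sc A B) (sci A B)
      (fun x y z => eq_sym (smA A B z y x)) (sm1r A B) (sm1 A B) (smVr A B) (smVl A B)
      (scA A B) (sc1 A B) (sc1r A B) (scVl A B) (scVr A B) (opcomp A B).

Definition lam (A : Type) (B : SB A) a b := sm A B (si A B a) (sc A B a b).
Definition mu (A : Type) (B : SB A) a b := sc A B (sci A B (lam A B a b)) (sc A B a b).
Definition rB (A : Type) (B : SB A) (p : A * A) := let '(a, b) := p in (lam A B a b, mu A B a b).

Definition rBo := rB.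

Section SBT.
Variables (A : Type) (B : SB A).
Local Notation m := (sm A B).
Local Notation i := (si A B).
Local Notation e := (se A B).
Local Notation c := (sc A B).
Local Notation ci := (sci A B).
Ltac gm := gnorm_gen (sm A B) (si A B) (se A B) (smA A B) (sm1 A B) (sm1r A B) (smVl A B) (smVr A B) no_cen idtac.
Ltac gc := gnorm_gen (sc A B) (sci A B) (se A B) (scA A B) (sc1 A B) (sc1r A B) (scVl A B) (scVr A B) no_cen idtac.

Local Notation lam := (lam A B).
Local Notation mu := (mu A B).
Local Notation rB := (rB A B).

Lemma c_lam a b : c a b = m a (lam a b).
Proof. unfold lam. gm. Qed.
Lemma lam_hom a b d : lam a (m b d) = m (lam a b) (lam a d).
Proof. unfold lam. rewrite scomp. gm. Qed.
Lemma c_inv a b : c a (i b) = m (m a (i (c a b))) a.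
Proof.
  have H := scomp A B a b (i b). rewrite smVr sc1r in H.
  transitivity (m (i (m (c a b) (i a))) (m (m (c a b) (i a)) (c a (i b)))). gm.
  rewrite -H. gm.
Qed.
Lemma lam_c a b d : lam (c a b) d = lam a (lam b d).
Proof. unfold lam at 2 3. rewrite scomp c_inv scA. unfold lam. gm. Qed.
Lemma lam_e b : lam e b = b.
Proof. unfold lam. rewrite sc1. gm. Qed.
Lemma lam_inv a b : lam a (i b) = i (lam a b).
Proof.
  have H := lam_hom a b (i b). rewrite smVr in H.
  have H0 : lam a e = e by unfold lam; rewrite sc1r; gm.
  rewrite H0 in H.
  transitivity (m (i (lam a b)) (m (lam a b) (lam a (i b)))). gm. rewrite -H. gm.
Qed.
Lemma lam_cancel a b : lam (ci a) (lam a b) = b.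
Proof. by rewrite -lam_c scVl lam_e. Qed.
Lemma lam_cancel' a b : lam a (lam (ci a) b) = b.
Proof. by rewrite -lam_c scVr lam_e. Qed.
Lemma lam_ci a : lam a (ci a) = i a.
Proof. unfold lam. rewrite scVr. gm. Qed.
Lemma c_lam_mu a b : c (lam a b) (mu a b) = c a b.
Proof. unfold mu. gc. Qed.
Lemma lam_ci' x : lam (ci x) (i x) = ci x.
Proof. rewrite -(lam_ci x). rewrite lam_cancel. reflexivity. Qed.
Lemma c_via a X : c (ci a) X = lam (ci a) (m (i a) X).
Proof. rewrite lam_hom. rewrite lam_ci'. rewrite -c_lam. reflexivity. Qed.
Lemma braid_y a b d : mu (lam a b) (lam (mu a b) d) = lam (mu a (lam b d)) (mu b d).
Proof.
 have Hq : lam (lam a b) (lam (mu a b) d) = lam (c a b) d by rewrite -lam_c c_lam_mu.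
 set x := lam a (lam b d).
 have Hx : lam (lam a b) (lam (mu a b) d) = x by rewrite Hq lam_c.
 have L : mu (lam a b) (lam (mu a b) d) = lam (ci x) (m (i x) (c (lam a b) (lam (mu a b) d))).
 { rewrite {1}/mu Hx. apply c_via. }
 have S : mu a (lam b d) = lam (ci x) (m (i x) (m a x)).
 { rewrite /mu -/x c_via. f_equal. rewrite c_lam -/x. gm. }
 have T : c (mu a (lam b d)) (mu b d) = lam (ci x) (m (i x) (c a (c b d))).
 { rewrite {1}/mu -/x -scA -scA c_lam_mu. apply c_via. }
 rewrite L.
 change (lam (mu a (lam b d)) (mu b d)) with (m (i (mu a (lam b d))) (c (mu a (lam b d)) (mu b d))).
 rewrite T S -lam_inv -lam_hom. f_equal.
 rewrite (c_lam (lam a b)) Hq.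
 rewrite scA (c_lam (c a b)) (c_lam a b). gm.
Qed.

Lemma rB_eq a b : rB (a, b) = (lam a b, mu a b).
Proof. reflexivity. Qed.
Lemma K a b : ci (mu a b) = m (ci (c a b)) (i (ci b)).
Proof.
  transitivity (c (ci (c a b)) (lam a b)). { unfold mu. gc. }
  rewrite /lam scomp scVl c_inv.
  have H : c (ci (c a b)) a = ci b by gc.
  rewrite H. gm.
Qed.
Definition taui b v := c (ci (m (ci v) (ci b))) (ci b).
Lemma tau_can1 b a : taui b (mu a b) = a.
Proof.
  rewrite /taui K.
  have H : m (m (ci (c a b)) (i (ci b))) (ci b) = ci (c a b) by gm.
  rewrite H. gc.
Qed.
Lemma tau_can2 b v : mu (taui b v) b = v.
Proof.
  have Hc : c (taui b v) b = ci (m (ci v) (ci b)) by rewrite /taui; gc.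
  transitivity (ci (ci (mu (taui b v) b))). gc.
  rewrite K Hc.
  have H1 : ci (ci (m (ci v) (ci b))) = m (ci v) (ci b) by gc.
  rewrite H1.
  have H2 : m (m (ci v) (ci b)) (i (ci b)) = ci v by gm.
  rewrite H2. gc.
Qed.
Lemma braid_rB : braid_eq A rB.
Proof.
  intros [[a b] d]. cbn -[lam mu].
  have Hq : lam (lam a b) (lam (mu a b) d) = lam (c a b) d by rewrite -lam_c c_lam_mu.
  have Hx : lam (lam a b) (lam (mu a b) d) = lam a (lam b d) by rewrite Hq lam_c.
  have Hy := braid_y a b d.
  have Hz : mu (mu a b) d = mu (mu a (lam b d)) (mu b d).
  { transitivity (c (ci (c (lam (lam a b) (lam (mu a b) d)) (mu (lam a b) (lam (mu a b) d)))) (c (c a b) d)).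
    - rewrite c_lam_mu. unfold mu at 1. rewrite -(c_lam_mu a b). gc.
    - have Hs : c (mu a (lam b d)) (mu b d) = c (ci (lam a (lam b d))) (c a (c b d)).
      { rewrite -(c_lam_mu b d). unfold mu at 1. gc. }
      rewrite Hx Hy.
      change (mu (mu a (lam b d)) (mu b d)) with (c (ci (lam (mu a (lam b d)) (mu b d))) (c (mu a (lam b d)) (mu b d))).
      rewrite Hs. gc. }
  rewrite Hx Hy Hz. reflexivity.
Qed.
Lemma rB_op_inv p : rBo A (opSB A B) (rB p) = p.
Proof.
  destruct p as [a b]. rewrite rB_eq.
  change (rBo A (opSB A B) (lam a b, mu a b)) with
    (m (c (lam a b) (mu a b)) (i (lam a b)), c (ci (m (c (lam a b) (mu a b)) (i (lam a b)))) (c (lam a b) (mu a b))).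
  have H : m (c (lam a b) (mu a b)) (i (lam a b)) = a by rewrite c_lam_mu (c_lam a b); gm.
  rewrite H c_lam_mu. f_equal. gc.
Qed.
End SBT.

Lemma nd_rB (A : Type) (B : SB A) : nd_solution A (rB A B).
Proof.
  split; [split; [constructor; exact (se A B) | split]|split].
  - exists (rB A (opSB A B)). exact (rB_op_inv A B). exact (rB_op_inv A (opSB A B)).
  - apply braid_rB.
  - intros a. exists (lam A B (sci A B a)); intro b; rewrite /sigma rB_eq /=.
    apply lam_cancel. apply lam_cancel'.
  - intros b. exists (taui A B b); intro a; rewrite /tau rB_eq /=.
    apply tau_can1. apply tau_can2.
Qed.

Lemma rB_coincide (A : Type) (B : SB A) :
  (forall p, rB A B p = rB A (opSB A B) p) <-> (forall x y, sm A B x y = sm A B y x).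
Proof.
  split.
  - intros H x y. have := H (x, sc A B (sci A B x) y). rewrite !rB_eq.
    move=> [] E _. rewrite /lam /= in E.
    have Hc : sc A B x (sc A B (sci A B x) y) = y by
      gnorm_gen (sc A B) (sci A B) (se A B) (scA A B) (sc1 A B) (sc1r A B) (scVl A B) (scVr A B) no_cen idtac.
    rewrite Hc in E. symmetry.
    transitivity (sm A B x (sm A B (sm A B (si A B x) y) x)).
    gnorm_gen (sm A B) (si A B) (se A B) (smA A B) (sm1 A B) (sm1r A B) (smVl A B) (smVr A B) no_cen idtac.
    rewrite E.
    gnorm_gen (sm A B) (si A B) (se A B) (smA A B) (sm1 A B) (sm1r A B) (smVl A B) (smVr A B) no_cen idtac.
  - intros H [a b]. rewrite !rB_eq.
    have Hl : lam A B a b = lam A (opSB A B) a b by rewrite /lam /=; apply H.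
    rewrite /mu Hl. reflexivity.
Qed.
Local Open Scope grp_scope.

Definition zc (G : group) (psi : G -> G) x y := psi (gcomm G (psi x) y).
Definition zd (G : group) (psi : G -> G) x y := psi (gcomm G x y).
Definition circ1 (G : group) (psi : G -> G) (a b : G) := a * psi a * b * (psi a)^-1.
Definition ci1 (G : group) (psi : G -> G) (a : G) := (psi a)^-1 * a^-1 * psi a.

Ltac cen_test x := lazymatch x with zc _ _ _ _ => constr:(true) | zd _ _ _ _ => constr:(true)
  | _ => constr:(false) end.
Ltac cen_tac := solve [match goal with H : forall x y, center _ _ |- _ => apply H end].
Ltac gg G := gnorm_gen (gmul G) (ginv G) (gone G) (gmulA G) (gmul1g G) (gmulg1 G) (gmulVg G) (gmulgV G) cen_test cen_tac.

Section C.
Variables (G : group) (psi : G -> G) (Hpsi : is_endo G psi).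
Lemma psi1 : psi 1 = 1.
Proof.
  have H := Hpsi 1 1. rewrite gmul1g in H.
  transitivity ((psi 1)^-1 * (psi 1 * psi 1)). gg G. rewrite -H. gg G.
Qed.
Lemma psiV x : psi (x^-1) = (psi x)^-1.
Proof.
  have H := Hpsi x (x^-1). rewrite gmulgV psi1 in H.
  transitivity ((psi x)^-1 * (psi x * psi (x^-1))). gg G. rewrite -H. gg G.
Qed.
Ltac push := rewrite ?Hpsi ?psiV ?psi1.

Lemma E1 x y : psi (psi x * y * (psi x)^-1) = zc G psi x y * psi y.
Proof. rewrite /zc /gcomm. push. gg G. Qed.
Lemma E1' x y : psi ((psi x)^-1 * y * psi x) = zc G psi (x^-1) y * psi y.
Proof. rewrite /zc /gcomm. push. gg G. Qed.
Lemma E1w w x y : psi (w * psi x * y * (psi x)^-1) = psi w * (zc G psi x y * psi y).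
Proof. rewrite /zc /gcomm. push. gg G. Qed.
Lemma E1v w x y v : psi (w * psi x * y * (psi x)^-1 * v) = psi w * (zc G psi x y * psi y) * psi v.
Proof. rewrite /zc /gcomm. push. gg G. Qed.
Lemma E2 a b : psi a * psi b = zd G psi a b * psi b * psi a.
Proof. rewrite /zd /gcomm. push. gg G. Qed.

Hypothesis HZc : forall x y, center G (zc G psi x y).

Lemma c1A x y z : circ1 G psi x (circ1 G psi y z) = circ1 G psi (circ1 G psi x y) z.
Proof. rewrite /circ1 E1w. push. gg G. Qed.
Lemma c1_1 x : circ1 G psi 1 x = x.
Proof. rewrite /circ1 psi1. gg G. Qed.
Lemma c1_1r x : circ1 G psi x 1 = x.
Proof. rewrite /circ1. gg G. Qed.
Lemma c1_Vl x : circ1 G psi (ci1 G psi x) x = 1.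
Proof. rewrite /circ1 /ci1 E1'. push. gg G. Qed.
Lemma c1_Vr x : circ1 G psi x (ci1 G psi x) = 1.
Proof. rewrite /circ1 /ci1. gg G. Qed.
Lemma c1comp a b d : circ1 G psi a (b * d) = circ1 G psi a b * a^-1 * circ1 G psi a d.
Proof. rewrite /circ1. gg G. Qed.
Lemma CI1 a x : circ1 G psi (ci1 G psi a) x = (psi a)^-1 * a^-1 * x * psi a.
Proof. rewrite /circ1 /ci1 E1'. push. gg G. Qed.

Definition B1 : SB G := MkSB G (gmul G) (ginv G) (gone G) (circ1 G psi) (ci1 G psi)
  (gmulA G) (gmul1g G) (gmulg1 G) (gmulVg G) (gmulgV G)
  c1A c1_1 c1_1r c1_Vl c1_Vr c1comp.

Lemma r1_eq : r1 G psi = rB G B1.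
Proof.
  apply functional_extensionality. intros [g h]. rewrite rB_eq.
  have Hl : lam G B1 g h = psi g * h * (psi g)^-1 by rewrite /lam /= /circ1; gg G.
  rewrite /mu Hl /=. rewrite CI1 E1 /circ1. f_equal. push. gg G.
Qed.
Lemma r2_eq : r2 G psi = rB G (opSB G B1).
Proof.
  apply functional_extensionality. intros [g h]. rewrite rB_eq.
  have Hl : lam G (opSB G B1) g h = g * psi g * h * (psi g)^-1 * g^-1 by rewrite /lam /= /circ1; gg G.
  rewrite /mu Hl /=. rewrite CI1 E1v /circ1. f_equal. push. gg G.
Qed.

Hypothesis HZd : forall x y, center G (zd G psi x y).

Lemma c2comp a b d : a * circ1 G psi b d = circ1 G psi (circ1 G psi (a * b) (ci1 G psi a)) (a * d).
Proof. rewrite -c1A CI1 /circ1 Hpsi E2. gg G. Qed.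

Definition B2 : SB G := MkSB G (circ1 G psi) (ci1 G psi) (gone G) (gmul G) (ginv G)
  c1A c1_1 c1_1r c1_Vl c1_Vr
  (gmulA G) (gmul1g G) (gmulg1 G) (gmulVg G) (gmulgV G) c2comp.

Lemma r3_eq : r3 G psi = rB G B2.
Proof.
  apply functional_extensionality. intros [g h]. rewrite rB_eq.
  have Hl : lam G B2 g h = (psi g)^-1 * h * psi g by rewrite /lam /= CI1; gg G.
  rewrite /mu Hl /=. f_equal. gg G.
Qed.
Lemma r4_eq : r4 G psi = rB G (opSB G B2).
Proof.
  apply functional_extensionality. intros [g h]. rewrite rB_eq.
  have Hl : lam G (opSB G B2) g h = g * h * psi h * g^-1 * (psi h)^-1
    by rewrite /lam /= /circ1 /ci1 Hpsi E2; gg G.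
  rewrite /mu Hl /=. f_equal. gg G.
Qed.
End C.

Theorem mainTheorem7 (G : group) (psi : G -> G) (Hpsi : is_endo G psi) :
  maps_into_center G psi (comm_subgroup G (image G psi) (whole G)) ->
  (nd_solution G (r1 G psi) /\ nd_solution G (r2 G psi) /\
   mutually_inverse G (r1 G psi) (r2 G psi) /\
   (coincide G (r1 G psi) (r2 G psi) <-> abelian G)) /\
  (maps_into_center G psi (comm_subgroup G (whole G) (whole G)) ->
   nd_solution G (r3 G psi) /\ nd_solution G (r4 G psi) /\
   mutually_inverse G (r3 G psi) (r4 G psi) /\
   (coincide G (r3 G psi) (r4 G psi) <->
    (forall g h : G, g * psi g * h * (psi g)^-1 = h * psi h * g * (psi h)^-1))).
Proof.
  intros H1.
  have HZc : forall x y, center G (zc G psi x y).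
  { intros x y. unfold zc. apply H1. apply gen_in.
    exists (psi x), y. split; [exists x; reflexivity | split; [exact I | reflexivity]]. }
  split.
  - rewrite (r1_eq G psi Hpsi HZc) (r2_eq G psi Hpsi HZc).
    split; [apply nd_rB | split; [apply nd_rB | split]].
    + split; intro p.
      * exact (rB_op_inv G (opSB G (B1 G psi Hpsi HZc)) p).
      * exact (rB_op_inv G (B1 G psi Hpsi HZc) p).
    + exact (rB_coincide G (B1 G psi Hpsi HZc)).
  - intros H2.
    have HZd : forall x y, center G (zd G psi x y).
    { intros x y. unfold zd. apply H2. apply gen_in.
      exists x, y. split; [exact I | split; [exact I | reflexivity]]. }
    rewrite (r3_eq G psi Hpsi HZc HZd) (r4_eq G psi Hpsi HZc HZd).
    split; [apply nd_rB | split; [apply nd_rB | split]].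
    + split; intro p.
      * exact (rB_op_inv G (opSB G (B2 G psi Hpsi HZc HZd)) p).
      * exact (rB_op_inv G (B2 G psi Hpsi HZc HZd) p).
    + exact (rB_coincide G (B2 G psi Hpsi HZc HZd)).
Qed.
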